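(* Let $K\ge2$, $r\in[0,1]^K$ with $r(1)>r(2)>\cdots>r(K)$, and fix $j\in\{2,\ldots,K\}$. Write $\varepsilon:=1-\pi(j)$. There exists $\bar\varepsilon>0$ such that on the sector $\mathcal S_{\bar\varepsilon}:=\{\pi:\ 0<\varepsilon<\bar\varepsilon,\ \pi(1)\ge\varepsilon/K\}$, along the EG flow: (1) $\frac{d}{dt}\log\frac{\pi(1)}{\pi(j)}\ge\frac{\Delta_{1j}}{4K}\varepsilon$; (2) $\dot\varepsilon>0$.
   Context: Softmax policy $\pi_\theta(a)=e^{\theta(a)}/\sum_{a'}e^{\theta(a')}$ with $\theta\in\mathbb{R}^K$; advantage $U(a):=r(a)-\pi_\theta^\top r$; $\Delta_{ab}:=r(a)-r(b)$. The EG flow is $\dot\theta(a)=\sum_{a'=1}^K\mathbf{1}\{U(a')>0\}\pi(a')U(a')(\mathbf{1}\{a=a'\}-\pi(a))$. *)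

(* Defs.v *)
From HB Require Import structures.
From mathcomp Require Import all_boot all_order all_algebra.
From mathcomp Require Import all_classical all_reals all_analysis.
Set Implicit Arguments. Unset Strict Implicit. Unset Printing Implicit Defensive.
Import Order.TTheory GRing.Theory Num.Theory.
Local Open Scope ring_scope.

Definition softmax (R : realType) (K : nat) (theta : 'I_K -> R) (a : 'I_K) : R :=
  expR (theta a) / \sum_(b < K) expR (theta b).

Definition advantage (R : realType) (K : nat) (r : 'I_K -> R)
  (theta : 'I_K -> R) (a : 'I_K) : R :=
  r a - \sum_(b < K) softmax theta b * r b.

Definition EG_field (R : realType) (K : nat) (r : 'I_K -> R)
  (theta : 'I_K -> R) (a : 'I_K) : R :=
  \sum_(a' < K)
    (if 0 < advantage r theta a'
     then softmax theta a' * advantage r theta a' *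
          ((a == a')%:R - softmax theta a)
     else 0).

Definition EG_flow_at (R : realType) (K : nat) (r : 'I_K -> R)
  (theta : R -> 'I_K -> R) (t : R) : Prop :=
  forall (a : 'I_K),
    is_derive t 1 (fun s => theta s a) (EG_field r (theta t) a).

(* Main.v *)
Require Import Defs.
From HB Require Import structures.
From mathcomp Require Import all_boot all_order all_algebra.
From mathcomp Require Import all_classical all_reals all_analysis.
From mathcomp Require Import ring lra.
Import Order.TTheory GRing.Theory Num.Theory.
Local Open Scope ring_scope.

Section Helpers.
Variables (R : realType) (K : nat).

Lemma term_le_sum (f : 'I_K -> R) a : (forall b, 0 <= f b) -> f a <= \sum_b f b.
Proof.
move=> h; rewrite (bigD1 a) //=.
have : 0 <= \sum_(i | i != a) f i by apply: sumr_ge0.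
lra.
Qed.

Lemma two_le_sum (f : 'I_K -> R) a b : a != b -> (forall c, 0 <= f c) ->
  f a + f b <= \sum_c f c.
Proof.
move=> ab h; rewrite (bigD1 a) //= (bigD1 b) 1?eq_sym //=.
have : 0 <= \sum_(i | (i != a) && (i != b)) f i by apply: sumr_ge0.
lra.
Qed.

Variable theta : 'I_K -> R.

Lemma Z_gt0 (x0 : 'I_K) : 0 < \sum_b expR (theta b).
Proof.
apply: (lt_le_trans (expR_gt0 (theta x0))).
by apply: term_le_sum => b; apply/ltW/expR_gt0.
Qed.

Lemma p_gt0 (x0 : 'I_K) b : 0 < softmax theta b.
Proof. by rewrite /softmax divr_gt0 // ?expR_gt0 // (Z_gt0 x0). Qed.

Lemma p_sum (x0 : 'I_K) : \sum_b softmax theta b = 1.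
Proof.
rewrite /softmax -mulr_suml mulfV //.
by rewrite gt_eqF // (Z_gt0 x0).
Qed.

Lemma F_eq (r : 'I_K -> R) a :
  let g := fun b => if 0 < advantage r theta b
                    then softmax theta b * advantage r theta b else 0 in
  EG_field r theta a = g a - softmax theta a * \sum_b g b.
Proof.
move=> g; rewrite /EG_field.
have e : forall b, (if 0 < advantage r theta b then softmax theta b *
   advantage r theta b * ((a == b)%:R - softmax theta a) else 0)
   = g b * (a == b)%:R - softmax theta a * g b.
  by move=> b; rewrite /g; case: ifP => _; ring.
rewrite (eq_bigr _ (fun b _ => e b)) sumrB mulr_sumr.
congr (_ - _).
rewrite (bigD1 a) //= eqxx mulr1 big1 ?addr0 // => b ba.
by rewrite eq_sym (negbTE ba) mulr0.
Qed.

End Helpers.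
Lemma soft_derive (R : realType) (K : nat) (x0 : 'I_K) (theta : R -> 'I_K -> R)
  (v : 'I_K -> R) (t : R) j :
  (forall a, is_derive t 1 (fun s => theta s a) (v a)) ->
  is_derive t 1 (fun s => softmax (theta s) j)
    (softmax (theta t) j * (v j - \sum_b softmax (theta t) b * v b)).
Proof.
move=> hd.
have hE : forall b, is_derive t 1 (fun s => expR (theta s b)) (expR (theta t b) * v b).
  move=> b; exact: (is_derive1_comp (f := expR) (g := fun s => theta s b)).
have hZ : is_derive t 1 (fun s => \sum_b expR (theta s b))
           (\sum_b (expR (theta t b) * v b)).
  have := is_derive_sum (h := fun b s => expR (theta s b)) hE.
  suff -> : (\sum_(i < K) (fun s => expR (theta s i))) = (fun s => \sum_b expR (theta s b)) by [].
  by apply: funext => s; rewrite fct_sumE.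
have Zt := @Z_gt0 R K (theta t) x0.
have hV := is_deriveV (lt0r_neq0 Zt) hZ.
have hM := is_deriveM (hE j) hV.
have -> : (fun s => softmax (theta s) j) =
   (fun s => expR (theta s j)) * (fun s => (\sum_b expR (theta s b))^-1).
  by apply: funext => s.
move: hM; rewrite /softmax /=.
set Z := \sum_b expR (theta t b).
suff -> : expR (theta t j) / Z *
  (v j - \sum_b expR (theta t b) / Z * v b) =
  expR (theta t j) *: (- Z ^- 2 *: \sum_b expR (theta t b) * v b) +
  Z^-1 *: (expR (theta t j) * v j) by [].
have -> : \sum_b expR (theta t b) / Z * v b = Z^-1 * \sum_b expR (theta t b) * v b.
  by rewrite mulr_sumr; apply: eq_bigr => b _; ring.
rewrite /GRing.scale /=.
field.
by rewrite lt0r_neq0.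
Qed.
Theorem lemma3 (R : realType) (K : nat) (hK : (2 <= K)%N)
  (r : 'I_K -> R)
  (hr01 : forall a : 'I_K, 0 <= r a <= 1)
  (hrdec : forall a b : 'I_K, (val a < val b)%N -> r b < r a)
  (i1 j : 'I_K) (hi1 : val i1 = 0%N) (hj : (0 < val j)%N) :
  exists epsbar : R, 0 < epsbar /\
    forall (theta : R -> 'I_K -> R) (t : R), EG_flow_at r theta t ->
      let eps := 1 - softmax (theta t) j in
      0 < eps -> eps < epsbar -> eps / K%:R <= softmax (theta t) i1 ->
      (exists d : R,
         is_derive t 1
           (fun s => ln (softmax (theta s) i1 / softmax (theta s) j)) d /\
         (r i1 - r j) / (4 * K%:R) * eps <= d) /\
      (exists d : R,
         is_derive t 1 (fun s => 1 - softmax (theta s) j) d /\ 0 < d).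
Proof.
have i1j : i1 != j by apply/eqP => e; move: hj; rewrite -e hi1.
have hr1 : forall b, r b <= r i1.
  move=> b; case: (eqVneq b i1) => [->//|bi]; apply/ltW/hrdec; rewrite hi1 lt0n.
  by apply: contra bi => /eqP h; apply/eqP/val_inj; rewrite /= h hi1.
have hD : 0 < r i1 - r j by rewrite subr_gt0 hrdec // hi1.
have hD1 : r i1 - r j <= 1.
  by have := hr01 i1; have := hr01 j => /andP[? ?] /andP[? ?]; lra.
set D := r i1 - r j in hD hD1 *.
set k : R := K%:R.
have hk : 2 <= k by rewrite /k (ler_nat R 2 K).
clearbody k.
exists (D / (8 * (k * k))); split.
  by apply: divr_gt0 => //; nra.
move=> theta t hflow eps he0 hebar hp1.
have epsE : eps = 1 - softmax (theta t) j by [].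
clearbody eps.
set th := theta t in hp1 epsE *.
have hE : eps * (8 * (k * k)) < D by rewrite -ltr_pdivlMr //; nra.
have hes : eps * 32 <= 1.
  have h32 : 32 <= 8 * (k * k) by nra.
  have h33 : eps * 32 <= eps * (8 * (k * k)) by apply: ler_wpM2l; lra.
  lra.
have hE2 : 16 * eps * k <= D.
  have h16 : eps * (16 * k) <= eps * (8 * (k * k)) by apply: ler_wpM2l; nra.
  lra.
have hp := @p_gt0 R K th i1.
have hs := @p_sum R K th i1.
set p := softmax th in hp hs hp1 epsE *.
have pj_eq : p j = 1 - eps by rewrite epsE; ring.
have hp1k : eps <= p i1 * k by rewrite -ler_pdivrMr //; lra.
have pb_le : forall b, b != j -> p b <= eps.
  move=> b bj; have := @two_le_sum R K p b j bj (fun c => ltW (hp c)); rewrite hs; lra.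
set u := advantage r th.
set g := fun b => if 0 < u b then p b * u b else 0.
set S := \sum_b g b.
have hF : forall a, EG_field r th a = g a - p a * S by move=> a; exact: F_eq.
have hg0 : forall b, 0 <= g b.
  by move=> b; rewrite /g; case: ifP => // /ltW; apply: mulr_ge0; apply/ltW.
have u1 : (1 - eps) * D <= u i1.
  have -> : u i1 = \sum_b p b * (r i1 - r b).
    rewrite /u /advantage -/p.
    rewrite [RHS](eq_bigr (fun b => p b * r i1 - p b * r b)); last by move=> b _; rewrite mulrBr.
    by rewrite sumrB -mulr_suml hs mul1r.
  rewrite -pj_eq; apply: (@term_le_sum R K (fun b => p b * (r i1 - r b))) => b.
  by apply: mulr_ge0; [apply/ltW | rewrite subr_ge0].
have u1pos : 0 < u i1 by nra.
have g1 : g i1 = p i1 * u i1 by rewrite /g u1pos.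
have ujle : u j <= eps.
  have : p j * r j <= \sum_b p b * r b.
    apply: (@term_le_sum R K (fun b => p b * r b)) => b.
    by apply: mulr_ge0; [apply/ltW | case/andP: (hr01 b)].
  rewrite /u /advantage -/p pj_eq.
  by case/andP: (hr01 j) => ? ?; nra.
have gjle : g j <= eps.
  rewrite /g; case: ifP => // uj; have := hp j; rewrite pj_eq; nra.
have Sge : g j <= S by exact: (@term_le_sum R K g j hg0).
have Dlow : forall b, b != j -> g b - 2 * eps * g j <= EG_field r th b - EG_field r th j.
  move=> b bj; rewrite !hF pj_eq.
  have := pb_le b bj; have := hg0 j; have := hp b.
  move=> h1 h2 h3.
  have h4 : 0 <= (1 - eps - p b) * (S - g j) by apply: mulr_ge0; lra.
  have h5 : 0 <= g j * (eps - p b) by apply: mulr_ge0; lra.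
  nra.
set F := EG_field r th in hF Dlow.
have key1 : D / (4 * k) * eps <= F i1 - F j.
  have -> : D / (4 * k) * eps = (D * eps / 4) / k.
    by field; apply: lt0r_neq0; lra.
  rewrite ler_pdivrMr; last lra.
  have A := Dlow i1 i1j.
  have B : (g i1 - 2 * eps * g j) * k <= (F i1 - F j) * k
    by apply: ler_wpM2r => //; lra.
  have C : eps * ((1 - eps) * D) <= (p i1 * k) * u i1
    by apply: ler_pM => //; nra.
  have E : 2 * eps * g j * k <= 2 * eps * eps * k.
    by apply: ler_wpM2r; [lra | apply: ler_wpM2l; lra].
  have G : 0 <= eps * ((3/4 - eps) * D - 2 * eps * k) by apply: mulr_ge0; nra.
  rewrite g1 in B; nra.
split; last first.
  exists (-(p j * (F j - \sum_b p b * F b))); split.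
    have -> : (fun s => 1 - softmax (theta s) j) =
              cst 1 - (fun s => softmax (theta s) j) by apply: funext.
    have := is_deriveB (is_derive_cst (1 : R) t 1) (@soft_derive R K i1 theta _ t j hflow).
    by rewrite sub0r.
  set c := 2 * eps * g j.
  have hc0 : 0 <= c by rewrite /c; have := hg0 j; nra.
  have hsum : \sum_b p b * F b - F j = \sum_b p b * (F b - F j + c) - c.
    rewrite [in RHS](eq_bigr (fun b => p b * F b - p b * (F j - c)));
      last by move=> b _; ring.
    by rewrite sumrB -mulr_suml hs mul1r; ring.
  have hbig : p j * c + p i1 * (F i1 - F j + c) <= \sum_b p b * (F b - F j + c).
    rewrite (bigD1 j) //= (bigD1 i1) //=.
    have : 0 <= \sum_(i < K | (i != j) && (i != i1)) p i * (F i - F j + c).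
      apply: sumr_ge0 => b /andP[bj _]; apply: mulr_ge0; first exact/ltW.
      have := Dlow b bj; have := hg0 b; rewrite /c; lra.
    have -> : F j - F j + c = c by ring.
    move=> h; lra.
  have key1' : D * eps <= (F i1 - F j) * (4 * k).
    have -> : D * eps = (D / (4 * k) * eps) * (4 * k) by field; apply: lt0r_neq0; lra.
    by apply: ler_wpM2r => //; lra.
  have P : eps * (D * eps) <= (p i1 * k) * ((F i1 - F j) * (4 * k)).
    by apply: ler_pM => //; nra.
  have h8 : 0 < eps * eps * (D - eps * (8 * (k * k))) by apply: mulr_gt0; nra.
  have hkk : 0 < k * k by nra.
  have key2 : 2 * eps * eps * eps < p i1 * (F i1 - F j) by nra.
  have hce : c * (eps - p i1) <= 2 * eps * eps * eps.
    have hq := pb_le i1 i1j.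
    have a1 : g j * (eps - p i1) <= eps * (eps - p i1) by apply: ler_wpM2r; lra.
    have a2 : eps * (eps - p i1) <= eps * eps by apply: ler_wpM2l; have := hp i1; lra.
    have a3 : 2 * eps * (g j * (eps - p i1)) <= 2 * eps * (eps * eps)
      by apply: ler_wpM2l; lra.
    rewrite /c; lra.
  have hpos : 0 < \sum_b p b * F b - F j.
    rewrite hsum; rewrite pj_eq in hbig; nra.
  have -> : -(p j * (F j - \sum_b p b * F b)) = p j * (\sum_b p b * F b - F j) by ring.
  by apply: mulr_gt0.
exists (F i1 - F j); split => //.
have -> : (fun s => ln (softmax (theta s) i1 / softmax (theta s) j)) =
   (fun s => theta s i1) - (fun s => theta s j).
  apply: funext => s /=; rewrite /softmax.
  have Zs := @Z_gt0 R K (theta s) i1.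
  rewrite -[X in _ = X]expRK expRB; congr ln; field.
  by rewrite !lt0r_neq0 // expR_gt0.
exact: is_deriveB (hflow i1) (hflow j).
Qed.
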